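(* Let $k\ge1$, $\beta>0$, $J,J_p\in\mathbb{R}$, $a=e^{2\beta J}$, $b=e^{2\beta J_p}$. Let $\mathbf{u}=\{\mathbf{u}_{xy}\}$, with $\mathbf{u}_{xy}=(u_{xy,1},u_{xy,2},u_{xy,3})\in(0,\infty)^3$ for each $x\in V$ and $y\in S(x)$, satisfy for every such edge $$u_{xy,1}=a\prod_{z\in S(y)}\frac{b u_{yz,3}+1}{u_{yz,3}+b},\quad u_{xy,2}=a\prod_{z\in S(y)}\frac{(b u_{yz,2}+1)u_{yz,3}}{(u_{yz,3}+b)u_{yz,1}},\quad u_{xy,3}=a\prod_{z\in S(y)}\frac{(b u_{yz,3}+1)u_{yz,1}}{(u_{yz,2}+b)u_{yz,3}}.$$ Then two things hold. (i) There exist boundary fields $\mathbf{h}$ with $u_{xy,1}=a e^{h_{xy,++}+h_{xy,-+}}$, $u_{xy,2}=a e^{h_{xy,--}+h_{xy,-+}}$ and $u_{xy,3}=a e^{h_{xy,++}+h_{xy,+-}}$ for all edges, such that the measures $\mu^{(n)}_{\mathbf{h}}$ are compatible. (ii) All boundary fields $\mathbf{h}$ satisfying these relations give the same family $\{\mu^{(n)}_{\mathbf{h}}\}_{n\ge1}$. Consequently there is a unique Gibbs measure $\mu_{\mathbf{u}}$ associated with $\mathbf{u}$.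
   Context: $\Gamma^k_+=(V,\Lambda)$ is the semi-infinite Cayley tree of order $k$ with root $x^0$. We write $|x|=d(x,x^0)$, $W_n=\{|x|=n\}$, $V_n=\{|x|\le n\}$, and $S(x)$ for the set of direct successors of $x$. Nearest neighbours $\langle x,y\rangle$ satisfy $d(x,y)=1$. Prolonged next-nearest neighbours $\widetilde{>x,y<}$ satisfy $d(x,y)=2$ and $|x|\ne|y|$. The Hamiltonian is $$H_n(\sigma)=-J_p\sum_{\widetilde{>x,y<}\subset V_n}\sigma(x)\sigma(y)-J\sum_{\langle x,y\rangle\subset V_n}\sigma(x)\sigma(y)$$ for $\sigma\in\{-1,+1\}^{V_n}$. A boundary field $\mathbf{h}$ assigns reals $h_{xy,++},h_{xy,+-},h_{xy,-+},h_{xy,--}$ to each edge. The measures are $$\mu^{(n)}_{\mathbf{h}}(\sigma)=Z_n^{-1}\exp\Big[-\beta H_n(\sigma)+\sum_{x\in W_{n-1}}\sum_{y\in S(x)}\sigma(x)\sigma(y)h_{xy,\sigma(x)\sigma(y)}\Big],$$ with $Z_n$ the normalizing constant. They are compatible if $\sum_{\omega\in\{-1,+1\}^{W_n}}\mu^{(n)}_{\mathbf{h}}(\sigma\vee\omega)=\mu^{(n-1)}_{\mathbf{h}}(\sigma)$ for all $n\ge2$ and all $\sigma\in\{-1,+1\}^{V_{n-1}}$. A compatible family determines, by Kolmogorov's theorem, a unique probability measure on $\{-1,+1\}^V$ with these marginals, called a Gibbs measure. *)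

(* Defs.v *)
From HB Require Import structures.
From mathcomp Require Import all_boot all_order all_algebra.
From mathcomp Require Import reals sequences exp.
Set Implicit Arguments. Unset Strict Implicit. Unset Printing Implicit Defensive.
Import Order.TTheory GRing.Theory Num.Theory.
Local Open Scope ring_scope.

(* Vertices of the semi-infinite Cayley tree of order k: finite words over
   'I_k; the root x^0 is the empty word, |x| = size x, and the direct
   successors of x are the words rcons x i (i : 'I_k). *)
Definition word (k : nat) := seq 'I_k.

Definition level (k m : nat) : seq (word k) :=
  [seq val t | t <- enum {: m.-tuple 'I_k}].

Definition ball (k n : nat) : seq (word k) :=
  flatten [seq level k m | m <- iota 0 n.+1].

(* Spin configurations: true = +1, false = -1.  A configuration on the whole
   tree; quantities indexed by n only depend on its restriction to V_n. *)
Definition spin {R : pzRingType} (b : bool) : R := if b then 1 else -1.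

Definition glue (k : nat) (L : seq (word k)) (om : {ffun seq_sub L -> bool})
  (sg : word k -> bool) : word k -> bool :=
  fun x => match (insub x : option (seq_sub L)) with
           | Some v => om v
           | None => sg x
           end.

(* Boundary field: h x i s t = h_{xy, s t} for the edge x -> y = rcons x i,
   where s is the sign of sigma(x) and t the sign of sigma(y). *)
Definition bfield (R : realType) (k : nat) := word k -> 'I_k -> bool -> bool -> R.

(* H_n(sigma): prolonged next-nearest-neighbour pairs in V_n are exactly the
   pairs (x, x ++ [:: i; j]) with |x| + 2 <= n; nearest-neighbour pairs in V_n
   are (x, rcons x i) with |x| + 1 <= n; each unordered pair counted once. *)
Definition Ham (R : realType) (k : nat) (J Jp : R) (n : nat) (sg : word k -> bool) : R :=
  - Jp * (\sum_(x <- ball k n | (size x + 2 <= n)%N) \sum_(i < k) \sum_(j < k)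
            spin (sg x) * spin (sg (x ++ [:: i; j])))
  - J * (\sum_(x <- ball k n | (size x + 1 <= n)%N) \sum_(i < k)
            spin (sg x) * spin (sg (rcons x i))).

Definition bterm (R : realType) (k : nat) (h : bfield R k) (n : nat)
  (sg : word k -> bool) : R :=
  \sum_(x <- level k n.-1) \sum_(i < k)
     spin (sg x) * spin (sg (rcons x i)) * h x i (sg x) (sg (rcons x i)).

Definition weight (R : realType) (k : nat) (beta J Jp : R) (h : bfield R k)
  (n : nat) (sg : word k -> bool) : R :=
  expR (- beta * Ham J Jp n sg + bterm h n sg).

Definition Zpart (R : realType) (k : nat) (beta J Jp : R) (h : bfield R k)
  (n : nat) : R :=
  \sum_(om : {ffun seq_sub (ball k n) -> bool})
     weight beta J Jp h n (glue om (fun _ => true)).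

Definition mu (R : realType) (k : nat) (beta J Jp : R) (h : bfield R k)
  (n : nat) (sg : word k -> bool) : R :=
  weight beta J Jp h n sg / Zpart beta J Jp h n.

Definition compatible (R : realType) (k : nat) (beta J Jp : R) (h : bfield R k) : Prop :=
  forall (n : nat), (2 <= n)%N -> forall sg : word k -> bool,
    \sum_(om : {ffun seq_sub (level k n) -> bool}) mu beta J Jp h n (glue om sg)
    = mu beta J Jp h n.-1 sg.

(* The fixed-point system of the theorem, with a = e^{2 beta J}, b = e^{2 beta J_p};
   the edge x -> y is (x, i) with y = rcons x i, and S(y) = {rcons y j}. *)
Definition u_system (R : realType) (k : nat) (beta J Jp : R)
  (u1 u2 u3 : word k -> 'I_k -> R) : Prop :=
  let a := expR (2 * beta * J) in
  let b := expR (2 * beta * Jp) in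
  forall (x : word k) (i : 'I_k), let y := rcons x i in
  [/\ u1 x i = a * \prod_(j < k) ((b * u3 y j + 1) / (u3 y j + b)),
      u2 x i = a * \prod_(j < k) (((b * u2 y j + 1) * u3 y j) / ((u3 y j + b) * u1 y j))
    & u3 x i = a * \prod_(j < k) (((b * u3 y j + 1) * u1 y j) / ((u2 y j + b) * u3 y j))].

Definition u_of_h (R : realType) (k : nat) (beta J : R)
  (u1 u2 u3 : word k -> 'I_k -> R) (h : bfield R k) : Prop :=
  let a := expR (2 * beta * J) in
  forall (x : word k) (i : 'I_k),
  [/\ u1 x i = a * expR (h x i true true + h x i false true),
      u2 x i = a * expR (h x i false false + h x i false true)
    & u3 x i = a * expR (h x i true true + h x i true false)].

(* Main.v *)
Require Import Defs.
From HB Require Import structures.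
From mathcomp Require Import all_boot all_order all_algebra.
From mathcomp Require Import boolp reals sequences exp.
From mathcomp Require Import zify ring lra.
Import Order.TTheory GRing.Theory Num.Theory.
Local Open Scope ring_scope.

Lemma mem_level (k m : nat) (x : word k) : (x \in level k m) = (size x == m).
Proof.
apply/idP/idP.
- by case/mapP => t _ ->; rewrite size_tuple.
- move=> /eqP hx; apply/mapP; exists (Tuple (introT eqP hx)) => //.
  by rewrite mem_enum.
Qed.

Lemma uniq_level (k m : nat) : uniq (level k m).
Proof. by rewrite map_inj_uniq ?enum_uniq //; apply: val_inj. Qed.

Lemma level_perm (k m : nat) :
  perm_eq (level k m.+1) [seq rcons x i | x <- level k m, i <- index_enum 'I_k].
Proof.
apply: uniq_perm; first exact: uniq_level.
- rewrite allpairs_uniq ?uniq_level ?index_enum_uniq //.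
  by move=> [x i] [y j] _ _ /= /rcons_inj [-> ->].
move=> w; rewrite mem_level; apply/idP/idP.
- case/lastP: w => [//|x i]; rewrite size_rcons eqSS => hx.
  by apply/allpairsP; exists (x, i); rewrite /= mem_level hx mem_index_enum.
- by case/allpairsP => [[x i]] /= [hx _ ->]; rewrite size_rcons; rewrite mem_level in hx.
Qed.

Lemma big_levelS (R : Type) (idx : R) (op : Monoid.com_law idx) (k m : nat) (F : word k -> R) :
  \big[op/idx]_(y <- level k m.+1) F y =
  \big[op/idx]_(x <- level k m) \big[op/idx]_(i < k) F (rcons x i).
Proof. by rewrite (perm_big _ (level_perm k m)) big_allpairs_dep. Qed.

Lemma ballS (k n : nat) : ball k n.+1 = ball k n ++ level k n.+1.
Proof. by rewrite /ball -addn1 iotaD map_cat flatten_cat /= cats0 add0n. Qed.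

Lemma ball0 (k : nat) : ball k 0 = level k 0.
Proof. by rewrite /ball /= cats0. Qed.

Lemma mem_ball (k n : nat) (x : word k) : (x \in ball k n) = (size x <= n)%N.
Proof.
elim: n => [|n IH]; first by rewrite ball0 mem_level leqn0.
by rewrite ballS mem_cat IH mem_level (leq_eqVlt _ n.+1) ltnS orbC.
Qed.

Lemma uniq_ball (k n : nat) : uniq (ball k n).
Proof.
elim: n => [|n IH]; first by rewrite ball0 uniq_level.
rewrite ballS cat_uniq IH uniq_level /= andbT.
apply/hasPn => x; rewrite mem_level mem_ball => /eqP ->; by rewrite ltnn.
Qed.

Lemma big_seq_condE (R : Type) (idx : R) (op : Monoid.com_law idx) (T : eqType)
  (s : seq T) (P Q : pred T) (F : T -> R) :
  {in s, P =1 Q} -> \big[op/idx]_(x <- s | P x) F x = \big[op/idx]_(x <- s | Q x) F x.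
Proof.
move=> H; rewrite big_seq_cond [RHS]big_seq_cond; apply: eq_bigl => x.
by case: (boolP (x \in s)) => //= hx; rewrite H.
Qed.

Lemma big_pred0_seq (R : Type) (idx : R) (op : Monoid.com_law idx) (T : eqType)
  (s : seq T) (P : pred T) (F : T -> R) :
  {in s, forall x, P x = false} -> \big[op/idx]_(x <- s | P x) F x = idx.
Proof.
move=> H; rewrite big_seq_cond big_pred0 // => x.
by case: (boolP (x \in s)) => //= hx; rewrite H.
Qed.

Lemma big_predT_seq (R : Type) (idx : R) (op : Monoid.com_law idx) (T : eqType)
  (s : seq T) (P : pred T) (F : T -> R) :
  {in s, forall x, P x = true} -> \big[op/idx]_(x <- s | P x) F x = \big[op/idx]_(x <- s) F x.
Proof. by move=> H; apply: big_seq_condE => x hx; rewrite H. Qed.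

Lemma sum_ball_size (R : Type) (idx : R) (op : Monoid.com_law idx) (k n m : nat) (F : word k -> R) :
  (m <= n)%N ->
  \big[op/idx]_(x <- ball k n | size x == m) F x = \big[op/idx]_(x <- level k m) F x.
Proof.
elim: n => [|n IH] hm.
  rewrite ball0; move: hm; rewrite leqn0 => /eqP ->.
  by rewrite big_predT_seq // => x; rewrite mem_level.
rewrite ballS big_cat /=.
case: (ltngtP m n.+1) hm => // hm _.
  rewrite IH //; rewrite [X in op _ X]big_pred0_seq ?Monoid.mulm1 //.
  by move=> x; rewrite mem_level => /eqP ->; apply/negbTE; lia.
rewrite -hm [X in op X _]big_pred0_seq ?Monoid.mul1m.
  by rewrite big_predT_seq // => x; rewrite mem_level.
by move=> x; rewrite mem_ball => h; apply/negbTE; lia.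
Qed.

Lemma sum_ball_step (R : Type) (idx : R) (op : Monoid.com_law idx) (k m c N : nat) (F : word k -> R) :
  (0 < c)%N -> (m + c = N.+1)%N ->
  \big[op/idx]_(x <- ball k N.+1 | (size x + c <= N.+1)%N) F x =
  op (\big[op/idx]_(x <- ball k N | (size x + c <= N)%N) F x) (\big[op/idx]_(x <- level k m) F x).
Proof.
move=> hc hm.
rewrite ballS big_cat /=.
rewrite [X in op _ X]big_pred0_seq ?Monoid.mulm1; last first.
  by move=> x; rewrite mem_level => /eqP ->; apply/negbTE; lia.
rewrite (bigID (fun x => size x == m)) /= Monoid.mulmC; apply: f_equal2.
  by apply: eq_bigl => x; apply/idP/idP; lia.
rewrite -(sum_ball_size _ _ _ _ N); last by lia.
by apply: eq_bigl => x; apply/idP/idP; lia.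
Qed.

Lemma glue_notin (k : nat) (L : seq (word k)) (om : {ffun seq_sub L -> bool}) sg x :
  x \notin L -> glue om sg x = sg x.
Proof. by move=> hx; rewrite /glue insubF //; apply/negbTE. Qed.

Lemma glue_val (k : nat) (L : seq (word k)) (om : {ffun seq_sub L -> bool}) sg (w : seq_sub L) :
  glue om sg (val w) = om w.
Proof. by rewrite /glue valK. Qed.

Lemma big_seq_sub (R : Type) (idx : R) (op : Monoid.com_law idx) (k : nat)
  (L : seq (word k)) (F : word k -> R) : uniq L ->
  \big[op/idx]_(w <- L) F w = \big[op/idx]_(w : seq_sub L) F (val w).
Proof.
move=> uL.
rewrite -(big_map val xpredT F); apply: perm_big.
apply: uniq_perm => //.
  by rewrite map_inj_uniq ?index_enum_uniq //; apply: val_inj.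
move=> x; apply/idP/idP.
  move=> hx; apply/mapP; exists (SeqSub hx) => //; exact: mem_index_enum.
by case/mapP => w _ ->; apply: ssvalP.
Qed.

Lemma sum_glue_prod (R : realType) (k : nat) (L : seq (word k)) (g : word k -> bool -> R) sg :
  uniq L ->
  \sum_(om : {ffun seq_sub L -> bool}) \prod_(w <- L) g w (glue om sg w)
  = \prod_(w <- L) \sum_(b : bool) g w b.
Proof.
move=> uL.
rewrite [RHS](big_seq_sub _ _ _ _ _ _ uL).
under eq_bigr => om _ do rewrite (big_seq_sub _ _ _ _ _ _ uL).
under eq_bigr => om _ do under eq_bigr => w _ do rewrite glue_val.
by rewrite bigA_distr_bigA.
Qed.

Lemma glue_in_val (k : nat) (L : seq (word k)) (om : {ffun seq_sub L -> bool}) sg x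
  (hx : x \in L) : glue om sg x = om (SeqSub hx).
Proof. by rewrite /glue insubT. Qed.

Lemma glue_in (k : nat) (L : seq (word k)) (om : {ffun seq_sub L -> bool}) sg sg' x :
  x \in L -> glue om sg x = glue om sg' x.
Proof. by move=> hx; rewrite !(glue_in_val _ _ _ _ _ hx). Qed.

Lemma sum_glue_cat (R : realType) (k : nat) (L1 L2 : seq (word k))
  (F : (word k -> bool) -> R) sg :
  uniq (L1 ++ L2) ->
  \sum_(om : {ffun seq_sub (L1 ++ L2) -> bool}) F (glue om sg)
  = \sum_(o1 : {ffun seq_sub L1 -> bool}) \sum_(o2 : {ffun seq_sub L2 -> bool})
      F (glue o2 (glue o1 sg)).
Proof.
move=> uL.
have disj : forall x, x \in L1 -> x \notin L2.
  move: uL; rewrite cat_uniq => /and3P [_ /hasPn H _] x h1.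
  by apply/negP => h2; move: (H x h2); rewrite h1.
pose s0 : word k -> bool := fun _ => true.
pose phi (p : {ffun seq_sub L1 -> bool} * {ffun seq_sub L2 -> bool}) :
  {ffun seq_sub (L1 ++ L2) -> bool} := [ffun w => glue p.2 (glue p.1 s0) (val w)].
pose psi (om : {ffun seq_sub (L1 ++ L2) -> bool}) :
  {ffun seq_sub L1 -> bool} * {ffun seq_sub L2 -> bool} :=
  ([ffun w => glue om s0 (val w)], [ffun w => glue om s0 (val w)]).
have phiE : forall p, glue (phi p) sg = glue p.2 (glue p.1 sg).
  move=> [o1 o2]; apply: funext => x /=.
  case: (boolP (x \in L1 ++ L2)) => hx.
    rewrite (@glue_in_val k _ (phi (o1, o2)) sg x hx) ffunE /=.
    case: (boolP (x \in L2)) => h2; first exact: (@glue_in k L2 o2 _ _ x h2).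
    rewrite !(@glue_notin k L2 o2) //; apply: (@glue_in k L1 o1).
    by move: hx; rewrite mem_cat (negbTE h2) orbF.
  move: hx; rewrite mem_cat negb_or => /andP [h1 h2].
  by rewrite !glue_notin // mem_cat negb_or h1.
have bij : bijective phi.
  exists psi.
    move=> [o1 o2]; rewrite /psi /=; congr pair; apply/ffunP => w; rewrite ffunE.
      have hw : val w \in L1 ++ L2 by rewrite mem_cat ssvalP.
      rewrite (glue_in_val _ _ _ _ _ hw) ffunE /= glue_notin; first exact: glue_val.
      exact: disj (ssvalP w).
    have hw : val w \in L1 ++ L2 by rewrite mem_cat ssvalP orbT.
    by rewrite (glue_in_val _ _ _ _ _ hw) ffunE /= glue_val.
  move=> om; apply/ffunP => w; rewrite ffunE /=.
  case: (boolP (val w \in L2)) => h2.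
    rewrite (glue_in_val _ _ _ _ _ h2) ffunE /=.
    exact: glue_val.
  have h1 : val w \in L1 by move: (ssvalP w); rewrite mem_cat (negbTE h2) orbF.
  rewrite glue_notin // (glue_in_val _ _ _ _ _ h1) ffunE /=.
  exact: glue_val.
rewrite (reindex phi) /=; last by apply: onW_bij.
under eq_bigr => p _ do rewrite phiE.
by rewrite pair_bigA.
Qed.

Lemma eq_big_seq_cond (R : Type) (idx : R) (op : Monoid.com_law idx) (T : eqType)
  (s : seq T) (P : pred T) (F G : T -> R) :
  (forall x, x \in s -> P x -> F x = G x) ->
  \big[op/idx]_(x <- s | P x) F x = \big[op/idx]_(x <- s | P x) G x.
Proof.
move=> H; rewrite big_seq_cond [RHS]big_seq_cond.
by apply: eq_bigr => x /andP [h1 h2]; apply: H.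
Qed.

Lemma HamS (R : realType) (k : nat) (J Jp : R) (n : nat) (sg : word k -> bool) :
  Ham J Jp n.+2 sg = Ham J Jp n.+1 sg
  - Jp * (\sum_(x <- level k n) \sum_(i < k) \sum_(j < k)
            spin (sg x) * spin (sg (x ++ [:: i; j])))
  - J * (\sum_(y <- level k n.+1) \sum_(i < k) spin (sg y) * spin (sg (rcons y i))).
Proof.
rewrite /Ham.
rewrite (sum_ball_step _ _ _ _ n.+1 1 n.+1); last 2 first; [by []|by rewrite addn1|].
rewrite (sum_ball_step _ _ _ _ n 2 n.+1); last 2 first; [by []|by rewrite addn2|].
rewrite /=; ring.
Qed.

Lemma Ham_local (R : realType) (k : nat) (J Jp : R) (n : nat) (sg sg' : word k -> bool) :
  (forall x, (size x <= n)%N -> sg x = sg' x) -> Ham J Jp n sg = Ham J Jp n sg'.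
Proof.
move=> H; rewrite /Ham.
have E1 : \sum_(x <- ball k n | (size x + 2 <= n)%N) \sum_(i < k) \sum_(j < k)
            spin (R:=R) (sg x) * spin (R:=R) (sg (x ++ [:: i; j])) =
          \sum_(x <- ball k n | (size x + 2 <= n)%N) \sum_(i < k) \sum_(j < k)
            spin (R:=R) (sg' x) * spin (R:=R) (sg' (x ++ [:: i; j])).
  apply: eq_big_seq_cond => x hx hs.
  apply: eq_bigr => i _; apply: eq_bigr => j _.
  by rewrite !H // ?size_cat /=; lia.
have E2 : \sum_(x <- ball k n | (size x + 1 <= n)%N) \sum_(i < k)
            spin (R:=R) (sg x) * spin (R:=R) (sg (rcons x i)) =
          \sum_(x <- ball k n | (size x + 1 <= n)%N) \sum_(i < k)
            spin (R:=R) (sg' x) * spin (R:=R) (sg' (rcons x i)).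
  apply: eq_big_seq_cond => x hx hs.
  apply: eq_bigr => i _.
  by rewrite !H // ?size_rcons /=; lia.
by rewrite E1 E2.
Qed.

Definition par {k : nat} (w : word k) : word k := take (size w).-1 w.

Lemma par_rcons (k : nat) (y : word k) j : par (rcons y j) = y.
Proof. by rewrite /par size_rcons /= -cats1 take_size_cat. Qed.

Definition lg {R : realType} {k : nat} (beta J Jp : R) (h : bfield R k) (d : 'I_k)
  (sg : word k -> bool) (w : word k) (b : bool) : R :=
  beta * Jp * spin (sg (par (par w))) * spin b + beta * J * spin (sg (par w)) * spin b
  + spin (sg (par w)) * spin b * h (par w) (last d w) (sg (par w)) b.

Lemma combine_lem (R : realType) (beta J Jp H SA SB ST SL : R) :
  SL = beta * Jp * SA + beta * J * SB + ST ->
  - beta * (H - Jp * SA - J * SB) + ST = - beta * H + SL.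
Proof. by move=> ->; ring. Qed.

Lemma weight_split (R : realType) (k : nat) (beta J Jp : R) (h : bfield R k) (d : 'I_k)
  (n : nat) (sg : word k -> bool) (om : {ffun seq_sub (level k n.+2) -> bool}) :
  weight beta J Jp h n.+2 (glue om sg) =
  expR (- beta * Ham J Jp n.+1 sg) *
  \prod_(w <- level k n.+2) expR (lg beta J Jp h d sg w (glue om sg w)).
Proof.
rewrite /weight -expR_sum -expRD; congr expR.
set tau := glue om sg.
have tauE : forall x : word k, (size x <= n.+1)%N -> tau x = sg x.
  by move=> x hx; rewrite /tau glue_notin // mem_level; apply/negP => /eqP; lia.
rewrite HamS (Ham_local _ _ _ _ _ _ _ tauE) /bterm /=.
apply: combine_lem.
rewrite !big_levelS.
rewrite !mulr_sumr -!big_split /=.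
apply: eq_big_seq => x hx.
have sx : size x = n by apply/eqP; rewrite -mem_level.
rewrite !mulr_sumr -!big_split /=.
apply: eq_bigr => i _.
rewrite !mulr_sumr -!big_split /=.
apply: eq_bigr => j _.
rewrite /lg !par_rcons last_rcons.
have -> : x ++ [:: i; j] = rcons (rcons x i) j by rewrite -!cats1 -catA.
rewrite (tauE x) ?sx // (tauE (rcons x i)) ?size_rcons ?sx //.
ring.
Qed.

Definition fe {R : realType} {k : nat} (beta J Jp : R) (h : bfield R k) (s0 s1 : bool)
  (y : word k) (j : 'I_k) : R :=
  \sum_(b : bool) expR (beta * Jp * spin s0 * spin b + beta * J * spin s1 * spin b
                         + spin s1 * spin b * h y j s1 b).

Definition Kc {R : realType} {k : nat} (beta J Jp : R) (h : bfield R k) (n : nat) : R :=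
  \prod_(x <- level k n) \prod_(i < k) \prod_(j < k) fe beta J Jp h false true (rcons x i) j.

Lemma main_sum (R : realType) (k : nat) (beta J Jp : R) (h : bfield R k) (d : 'I_k)
  (n : nat) (sg : word k -> bool) :
  (forall x i s0 s1, \prod_(j < k) fe beta J Jp h s0 s1 (rcons x i) j =
      (\prod_(j < k) fe beta J Jp h false true (rcons x i) j)
      * expR (spin s0 * spin s1 * h x i s0 s1)) ->
  \sum_(om : {ffun seq_sub (level k n.+2) -> bool}) weight beta J Jp h n.+2 (glue om sg)
  = Kc beta J Jp h n * weight beta J Jp h n.+1 sg.
Proof.
move=> Hedge.
under eq_bigr => om _ do rewrite (weight_split _ _ _ _ _ _ d).
rewrite -mulr_sumr.
rewrite (sum_glue_prod _ _ _ (fun w b => expR (lg beta J Jp h d sg w b)) sg (uniq_level k n.+2)).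
rewrite !big_levelS.
transitivity (expR (- beta * Ham J Jp n.+1 sg) *
  \prod_(x <- level k n) \prod_(i < k) \prod_(j < k)
     fe beta J Jp h (sg x) (sg (rcons x i)) (rcons x i) j).
  congr (_ * _); apply: eq_bigr => x _; apply: eq_bigr => i _; apply: eq_bigr => j _.
  by rewrite /fe /lg !par_rcons last_rcons.
under eq_bigr => x _ do under eq_bigr => i _ do rewrite Hedge.
rewrite /Kc /weight expRD /bterm /= expR_sum.
under [X in _ = _ * (_ * X)]eq_bigr => x _ do rewrite expR_sum.
under eq_bigr => x _ do rewrite big_split.
rewrite big_split /=.
ring.
Qed.

Lemma Z_step (R : realType) (k : nat) (beta J Jp : R) (h : bfield R k) (d : 'I_k) (n : nat) :
  (forall x i s0 s1, \prod_(j < k) fe beta J Jp h s0 s1 (rcons x i) j =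
      (\prod_(j < k) fe beta J Jp h false true (rcons x i) j)
      * expR (spin s0 * spin s1 * h x i s0 s1)) ->
  Zpart beta J Jp h n.+2 = Kc beta J Jp h n * Zpart beta J Jp h n.+1.
Proof.
move=> Hedge; rewrite /Zpart (ballS k n.+1).
rewrite sum_glue_cat; last by rewrite -ballS uniq_ball.
rewrite mulr_sumr; apply: eq_bigr => o1 _.
exact: main_sum.
Qed.

Lemma compat_of_edge (R : realType) (k : nat) (beta J Jp : R) (h : bfield R k) (d : 'I_k) :
  (forall x i s0 s1, \prod_(j < k) fe beta J Jp h s0 s1 (rcons x i) j =
      (\prod_(j < k) fe beta J Jp h false true (rcons x i) j)
      * expR (spin s0 * spin s1 * h x i s0 s1)) ->
  compatible beta J Jp h.
Proof.
move=> Hedge n hn sg.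
case: n hn => [|[|n]] // _.
have Kpos : 0 < Kc beta J Jp h n.
  rewrite /Kc; apply: prodr_gt0 => x _; apply: prodr_gt0 => i _; apply: prodr_gt0 => j _.
  by rewrite /fe big_bool /= addr_gt0 ?expR_gt0.
rewrite /mu -mulr_suml main_sum // (Z_step _ _ _ _ _ _ d) // /=.
rewrite invfM mulrACA mulfV ?mul1r //; exact: lt0r_neq0.
Qed.

Definition hdef {R : realType} {k : nat} (beta J : R) (u1 u2 u3 : word k -> 'I_k -> R) :
  bfield R k :=
  fun x i s0 s1 =>
   match s0, s1 with
   | true, true => ln (u1 x i / expR (2 * beta * J))
   | false, false => ln (u2 x i / expR (2 * beta * J))
   | true, false => ln (u3 x i / u1 x i)
   | false, true => 0
   end.

Lemma expR_spin2 (R : realType) (c : R) (s b : bool) :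
  expR (c * spin s * spin b) = if s == b then expR c else (expR c)^-1.
Proof.
by rewrite /spin; case: s; case: b => /=; rewrite ?mulr1 ?mulrN1 ?opprK ?expRN.
Qed.

Lemma expR_hterm (R : realType) (k : nat) (beta J : R) (u1 u2 u3 : word k -> 'I_k -> R)
  (x : word k) (i : 'I_k) (s b : bool) :
  0 < u1 x i -> 0 < u2 x i -> 0 < u3 x i ->
  expR (spin s * spin b * hdef beta J u1 u2 u3 x i s b) =
  match s, b with
  | true, true => u1 x i / expR (2 * beta * J)
  | false, false => u2 x i / expR (2 * beta * J)
  | true, false => u1 x i / u3 x i
  | false, true => 1
  end.
Proof.
move=> p1 p2 p3.
have pa := expR_gt0 (2 * beta * J).
rewrite /spin /hdef; case: s; case: b => /=;
  rewrite ?(mul1r, mulN1r, mulr1, mulr0, opprK, oppr0, expR0, invr1) ?expRN ?lnK ?invf_div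
    ?posrE ?divr_gt0 //.
Qed.

Lemma fe_closed (R : realType) (k : nat) (beta J Jp : R) (u1 u2 u3 : word k -> 'I_k -> R)
  (y : word k) (j : 'I_k) (s0 s1 : bool) :
  0 < u1 y j -> 0 < u2 y j -> 0 < u3 y j ->
  fe beta J Jp (hdef beta J u1 u2 u3) s0 s1 y j =
  \sum_(b : bool) (if s0 == b then expR (beta * Jp) else (expR (beta * Jp))^-1)
     * (if s1 == b then expR (beta * J) else (expR (beta * J))^-1)
     * expR (spin s1 * spin b * hdef beta J u1 u2 u3 y j s1 b).
Proof.
move=> p1 p2 p3; rewrite /fe; apply: eq_bigr => b _.
by rewrite !expRD !expR_spin2.
Qed.

Lemma edge_ok (R : realType) (k : nat) (beta J Jp : R) (u1 u2 u3 : word k -> 'I_k -> R) :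
  (forall x i, 0 < u1 x i /\ 0 < u2 x i /\ 0 < u3 x i) ->
  u_system beta J Jp u1 u2 u3 ->
  forall x i s0 s1,
  \prod_(j < k) fe beta J Jp (hdef beta J u1 u2 u3) s0 s1 (rcons x i) j =
      (\prod_(j < k) fe beta J Jp (hdef beta J u1 u2 u3) false true (rcons x i) j)
      * expR (spin s0 * spin s1 * hdef beta J u1 u2 u3 x i s0 s1).
Proof.
move=> Hpos Hsys x i s0 s1.
have [p1 [p2 p3]] := Hpos x i.
rewrite expR_hterm //.
set y := rcons x i.
have [e1 e2 e3] := Hsys x i; rewrite -/y in e1 e2 e3.
set P := expR (beta * Jp); set Q := expR (beta * J).
have hP : 0 < P by apply: expR_gt0.
have hQ : 0 < Q by apply: expR_gt0.
have ha : expR (2 * beta * J) = Q * Q by rewrite -expRD; congr expR; ring.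
have hb : expR (2 * beta * Jp) = P * P by rewrite -expRD; congr expR; ring.
rewrite ha hb in e1 e2 e3 *.
have fE : forall j s0 s1, fe beta J Jp (hdef beta J u1 u2 u3) s0 s1 y j =
  \sum_(b : bool) (if s0 == b then P else P^-1) * (if s1 == b then Q else Q^-1)
     * expR (spin s1 * spin b * hdef beta J u1 u2 u3 y j s1 b).
  move=> j t0 t1; have [q1 [q2 q3]] := Hpos y j; exact: fe_closed.
have fE2 : forall j s0 s1, fe beta J Jp (hdef beta J u1 u2 u3) s0 s1 y j =
  (if s0 then P else P^-1) * (if s1 then Q else Q^-1)
     * match s1 with true => u1 y j / (Q * Q) | false => 1 end
  + (if s0 then P^-1 else P) * (if s1 then Q^-1 else Q)
     * match s1 with true => u1 y j / u3 y j | false => u2 y j / (Q * Q) end.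
  move=> j t0 t1; have [q1 [q2 q3]] := Hpos y j.
  rewrite fE big_bool !expR_hterm // ha.
  by case: t0; case: t1.
have ne : forall z : R, 0 < z -> z != 0 by move=> z hz; rewrite gt_eqF.
case: s0; case: s1.
-
  rewrite e1 (mulrC (Q * Q)) mulfK ?ne ?mulr_gt0 // -big_split /=.
  apply: eq_bigr => j _; rewrite !fE2 /=.
  have [q1 [q2 q3]] := Hpos y j.
  have h3 : u3 y j + P * P != 0 by rewrite ne // addr_gt0 ?mulr_gt0.
  field; rewrite h3 !ne ?mulr_gt0 //.
-
  set P1 := (X in u1 x i = _ * X) in e1.
  set P3 := (X in u3 x i = _ * X) in e3.
  have nP3 : P3 != 0.
    apply/eqP => h0; move: p3; rewrite e3 h0 mulr0; by rewrite ltxx.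
  have key : \prod_(j < k) fe beta J Jp (hdef beta J u1 u2 u3) true false y j * P3 =
             \prod_(j < k) fe beta J Jp (hdef beta J u1 u2 u3) false true y j * P1.
    rewrite /P1 /P3 -!big_split /=; apply: eq_bigr => j _; rewrite !fE2 /=.
    have [q1 [q2 q3]] := Hpos y j.
    have h3 : u3 y j + P * P != 0 by rewrite ne // addr_gt0 ?mulr_gt0.
    have h2 : u2 y j + P * P != 0 by rewrite ne // addr_gt0 ?mulr_gt0.
    field; rewrite h3 h2 !ne ?mulr_gt0 //.
  apply: (mulIf nP3); rewrite key e1 e3.
  field; rewrite nP3 !ne //.
-
  by rewrite mulr1.
-
  rewrite e2 (mulrC (Q * Q)) mulfK ?ne ?mulr_gt0 // -big_split /=.
  apply: eq_bigr => j _; rewrite !fE2 /=.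
  have [q1 [q2 q3]] := Hpos y j.
  have h3 : u3 y j + P * P != 0 by rewrite ne // addr_gt0 ?mulr_gt0.
  field; rewrite h3 !ne ?mulr_gt0 //.
Qed.

Lemma uniq_part (R : realType) (k : nat) (beta J Jp : R) (u1 u2 u3 : word k -> 'I_k -> R)
  (h h' : bfield R k) :
  u_of_h beta J u1 u2 u3 h -> u_of_h beta J u1 u2 u3 h' ->
  forall (n : nat) (sg : word k -> bool),
    mu beta J Jp h n sg = mu beta J Jp h' n sg.
Proof.
move=> Hh Hh' n sg.
pose t x i := h x i false true - h' x i false true.
have claim : forall x i s0 s1, spin s0 * spin s1 * h' x i s0 s1 =
    spin s0 * spin s1 * h x i s0 s1 + t x i.
  move=> x i s0 s1.
  have [e1 e2 e3] := Hh x i; have [f1 f2 f3] := Hh' x i.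
  have na : expR (2 * beta * J) != 0 by rewrite gt_eqF ?expR_gt0.
  have g1 := expR_inj (mulfI na (etrans (esym e1) f1)).
  have g2 := expR_inj (mulfI na (etrans (esym e2) f2)).
  have g3 := expR_inj (mulfI na (etrans (esym e3) f3)).
  rewrite /t /spin; case: s0; case: s1 => /=; lra.
pose T := \sum_(x <- level k n.-1) \sum_(i < k) t x i.
have wE : forall sg', weight beta J Jp h' n sg' = weight beta J Jp h n sg' * expR T.
  move=> sg'; rewrite /weight.
  have bE' : bterm h' n sg' = bterm h n sg' + T.
    rewrite /bterm /T -big_split; apply: eq_bigr => x _.
    rewrite -big_split; apply: eq_bigr => i _.
    by rewrite claim.
  by rewrite bE' addrA expRD.
have ZE : Zpart beta J Jp h' n = Zpart beta J Jp h n * expR T.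
  by rewrite /Zpart mulr_suml; apply: eq_bigr => om _; rewrite wE.
rewrite /mu wE ZE invfM mulrACA mulfV ?mulr1 //.
by rewrite gt_eqF ?expR_gt0.
Qed.

Theorem theorem3p4 (R : realType) (k : nat) (beta J Jp : R)
  (u1 u2 u3 : word k -> 'I_k -> R) :
  (0 < k)%N -> 0 < beta ->
  (forall x i, 0 < u1 x i /\ 0 < u2 x i /\ 0 < u3 x i) ->
  u_system beta J Jp u1 u2 u3 ->
  (exists h : bfield R k, u_of_h beta J u1 u2 u3 h /\ compatible beta J Jp h) /\
  (forall h h' : bfield R k, u_of_h beta J u1 u2 u3 h -> u_of_h beta J u1 u2 u3 h' ->
     forall (n : nat), (1 <= n)%N -> forall sg : word k -> bool,
       mu beta J Jp h n sg = mu beta J Jp h' n sg).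
Proof.
move=> hk hbeta Hpos Hsys; split; last first.
  by move=> h h' Hh Hh' n _ sg; apply: uniq_part.
exists (hdef beta J u1 u2 u3); split; last first.
  apply: (compat_of_edge _ _ _ _ _ _ (Ordinal hk)).
  exact: edge_ok.
move=> x i; have [p1 [p2 p3]] := Hpos x i.
have pa := expR_gt0 (2 * beta * J).
have na : expR (2 * beta * J) != 0 by rewrite gt_eqF.
rewrite /hdef /= !addr0; split.

- by rewrite lnK ?posrE ?divr_gt0 // mulrC divfK.
- by rewrite lnK ?posrE ?divr_gt0 // mulrC divfK.
- rewrite expRD !lnK ?posrE ?divr_gt0 //.
  field; rewrite na gt_eqF //.
Qed.
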